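(* Let $\lambda>0$, $\omega_0\ne0$ with $\omega_0^2/(2\lambda)<2$, and let $\tilde{\mathbf r}_\lambda(t,\omega_0)$ be the trajectory defined in the context. Then at every time $t\ge0$ the minimum possible root-mean-square size of the system for its current cohesion is achieved: with $\varphi=\varphi(t)$, $$b(\varphi)=\frac{C(\mathbf m)}{f(\varphi)\sqrt{\sum_jm_j}}=\min\{b(\mathbf r):\ \mathbf r\in\mathfrak R,\ f(\mathbf r)=f(\varphi)\},$$ where $b(\varphi)$ and $f(\varphi)$ are the root-mean-square size and the cohesion of the system at time $t$.
   Context: Fix $N\ge2$, masses $\mathbf m=(m_1,\dots,m_N)$, $m_i>0$, $\gamma>0$. Planar configuration space $\mathfrak R=\{\mathbf r=(\mathbf r_1,\dots,\mathbf r_N)\in(\mathbb R^2)^N:\ \mathbf r_i\neq\mathbf r_j \text{ for } i\neq j\}$; cohesion $f(\mathbf r)=\sum_{i<j}\frac{\gamma m_im_j}{|\mathbf r_j-\mathbf r_i|}$; $g(\mathbf r)=\sum_i m_i|\mathbf r_i|^2$; root-mean-square size $b(\mathbf r)=\sqrt{g(\mathbf r)/\sum_jm_j}$; $C(\mathbf m)=\min\{f(\mathbf r):\mathbf r\in\mathfrak R,\ g(\mathbf r)=1\}$. Let $\mathbf r_\lambda=(\mathbf r_{1\lambda},\dots,\mathbf r_{N\lambda})$ be a global minimizer of $f+\lambda g$ on $\mathfrak R$; identify $\mathbb R^2$ with $\mathbb C$, $z_{j\lambda}\leftrightarrow\mathbf r_{j\lambda}$. Put $e=1-\omega_0^2/(2\lambda)$,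 $a(\varphi)=(1-e)/(1-e\cos\varphi)$, and define $\varphi(t)$ by $\omega_0t=\int_0^{\varphi(t)}\frac{(1-e)^2\,d\alpha}{(1-e\cos\alpha)^2}$. The trajectory $\tilde{\mathbf r}_\lambda(t,\omega_0)$ has $j$-th particle at complex position $z_{j\lambda}a(\varphi(t))e^{i\varphi(t)}$. *)

(* Defs.v *)
(* Planar positions are Coquelicot complex
   numbers C = R*R (R^2 identified with C). Configurations are functions
   nat -> C of which only the indices 0..N-1 matter. *)
From Stdlib Require Import Reals.
From Coquelicot Require Import Coquelicot.
Open Scope R_scope.

Fixpoint rsum (n : nat) (F : nat -> R) : R :=
  match n with O => 0 | S k => rsum k F + F k end.

Definition config (N : nat) (r : nat -> C) : Prop :=
  forall i j, (i < N)%nat -> (j < N)%nat -> i <> j -> r i <> r j.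

Definition cohesion (N : nat) (m : nat -> R) (gamma : R) (r : nat -> C) : R :=
  rsum N (fun j => rsum j (fun i => gamma * m i * m j / Cmod (Cminus (r j) (r i)))).

Definition gmom (N : nat) (m : nat -> R) (r : nat -> C) : R :=
  rsum N (fun i => m i * (Cmod (r i)) ^ 2).

Definition rms (N : nat) (m : nat -> R) (r : nat -> C) : R :=
  sqrt (gmom N m r / rsum N m).

(* C(m) = min { f(r) : r in \mathfrak R, g(r) = 1 }, taken as the greatest lower
   bound (it is attained) *)
Definition Cmin (N : nat) (m : nat -> R) (gamma : R) : R :=
  real (Glb_Rbar (fun x => exists r, config N r /\ gmom N m r = 1 /\
                                    cohesion N m gamma r = x)).

Definition global_minimizer (N : nat) (m : nat -> R) (gamma lambda : R)
    (r : nat -> C) : Prop :=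
  config N r /\
  forall r', config N r' ->
    cohesion N m gamma r + lambda * gmom N m r
      <= cohesion N m gamma r' + lambda * gmom N m r'.

Definition is_min_of (S : R -> Prop) (x : R) : Prop :=
  S x /\ forall y, S y -> x <= y.

Definition ecc (lambda omega0 : R) : R := 1 - omega0 ^ 2 / (2 * lambda).

Definition afun (e phi : R) : R := (1 - e) / (1 - e * cos phi).

(* integrand defining phi(t): omega0 t = int_0^phi (1-e)^2/(1-e cos a)^2 da *)
Definition phi_integrand (e alpha : R) : R := (1 - e) ^ 2 / (1 - e * cos alpha) ^ 2.

Definition traj (e : R) (z : nat -> C) (phi : R) : nat -> C :=
  fun j => Cmult (z j) (Cmult (RtoC (afun e phi)) (cos phi, sin phi)).

(* Main.v *)
Require Import Defs.
From Stdlib Require Import Reals Lra Lia Psatz.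
From Coquelicot Require Import Coquelicot.
Open Scope R_scope.

Lemma rsum_ext n F G : (forall i, (i < n)%nat -> F i = G i) -> rsum n F = rsum n G.
Proof.
  induction n; simpl; intros H; auto.
  rewrite IHn by (intros; apply H; lia). rewrite H by lia. reflexivity.
Qed.

Lemma rsum_scal n k F : rsum n (fun i => k * F i) = k * rsum n F.
Proof. induction n; simpl; [ring|]. rewrite IHn; ring. Qed.

Lemma rsum_nonneg n F : (forall i, (i < n)%nat -> 0 <= F i) -> 0 <= rsum n F.
Proof.
  induction n; simpl; intros H; [lra|].
  assert (0 <= rsum n F) by (apply IHn; intros; apply H; lia).
  assert (0 <= F n) by (apply H; lia). lra.
Qed.

Lemma rsum_pos n F k : (k < n)%nat -> (forall i, (i < n)%nat -> 0 <= F i) -> 0 < F k ->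
  0 < rsum n F.
Proof.
  induction n; simpl; intros Hk H Hp; [lia|].
  destruct (Nat.eq_dec k n) as [->|Hne].
  - assert (0 <= rsum n F) by (apply rsum_nonneg; intros; apply H; lia). lra.
  - assert (0 < rsum n F) by (apply IHn; [lia| intros; apply H; lia | auto]).
    assert (0 <= F n) by (apply H; lia). lra.
Qed.

Definition scale (r : nat -> C) (c : C) : nat -> C := fun j => Cmult (r j) c.

Lemma Cmod_sub_scale (x y c : C) : Cmod (Cminus (Cmult x c) (Cmult y c)) = Cmod (Cminus x y) * Cmod c.
Proof.
  rewrite <- Cmod_mult. f_equal. unfold Cminus. ring.
Qed.

Lemma gmom_scale N m r c : gmom N m (scale r c) = Cmod c ^ 2 * gmom N m r.
Proof.
  unfold gmom, scale. rewrite <- rsum_scal. apply rsum_ext; intros.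
  rewrite Cmod_mult. ring.
Qed.

Lemma coh_scale N m gamma r c : cohesion N m gamma (scale r c) = / Cmod c * cohesion N m gamma r.
Proof.
  unfold cohesion, scale. rewrite <- rsum_scal. apply rsum_ext; intros.
  rewrite <- rsum_scal. apply rsum_ext; intros.
  rewrite Cmod_sub_scale. unfold Rdiv. rewrite Rinv_mult. ring.
Qed.

Lemma config_scale N r (c : C) : c <> 0%C -> config N r -> config N (scale r c).
Proof.
  unfold config, scale; intros Hc H i j Hi Hj Hij E.
  apply (H i j Hi Hj Hij).
  rewrite <- (Cmult_1_r (r i)), <- (Cmult_1_r (r j)), <- (Cinv_r c Hc).
  rewrite !Cmult_assoc, E. reflexivity.
Qed.

Lemma gmom_pos N m r : (2 <= N)%nat -> (forall i, (i < N)%nat -> 0 < m i) ->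
  config N r -> 0 < gmom N m r.
Proof.
  intros HN Hm Hc. unfold gmom.
  assert (Hd : r 0%nat <> r 1%nat) by (apply Hc; lia).
  assert (exists k, (k < N)%nat /\ r k <> 0%C) as [k [Hk Hrk]].
  { destruct (Ceq_dec (r 0%nat) 0) as [E|E].
    - exists 1%nat; split; [lia|]. rewrite <- E. auto.
    - exists 0%nat; split; [lia|auto]. }
  apply rsum_pos with k; auto.
  - intros i Hi. pose proof (Hm i Hi). pose proof (Cmod_ge_0 (r i)). nra.
  - pose proof (Hm k Hk). assert (Cmod (r k) <> 0) by (intro E; apply Hrk, Cmod_eq_0, E).
    pose proof (Cmod_ge_0 (r k)).
    assert (0 < Cmod (r k) ^ 2) by (apply pow_lt; lra). nra.
Qed.

Lemma coh_pos N m gamma r : (2 <= N)%nat -> (forall i, (i < N)%nat -> 0 < m i) -> 0 < gamma ->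
  config N r -> 0 < cohesion N m gamma r.
Proof.
  intros HN Hm Hg Hc. unfold cohesion.
  assert (Hterm : forall j i, (j < N)%nat -> (i < j)%nat ->
     0 < gamma * m i * m j / Cmod (Cminus (r j) (r i))).
  { intros j i Hj Hi. assert (r j <> r i) by (apply Hc; lia).
    assert (Cmod (Cminus (r j) (r i)) <> 0).
    { intro E. apply Cmod_eq_0 in E. apply H.
      rewrite <- (Cplus_0_r (r i)), <- E. unfold Cminus. ring. }
    pose proof (Cmod_ge_0 (Cminus (r j) (r i))).
    pose proof (Hm i ltac:(lia)). pose proof (Hm j Hj).
    apply Rdiv_lt_0_compat; [|lra]. apply Rmult_lt_0_compat; [|lra].
    apply Rmult_lt_0_compat; lra. }
  apply rsum_pos with 1%nat; [lia| |].
  - intros j Hj. apply rsum_nonneg. intros i Hi. left. apply Hterm; lia.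
  - simpl. rewrite Rplus_0_l. apply Hterm; lia.
Qed.

Theorem theorem8p4 (N : nat) (m : nat -> R) (gamma lambda omega0 : R)
    (rl : nat -> C) :
  (2 <= N)%nat ->
  (forall i, (i < N)%nat -> 0 < m i) ->
  0 < gamma ->
  0 < lambda ->
  omega0 <> 0 ->
  omega0 ^ 2 / (2 * lambda) < 2 ->
  global_minimizer N m gamma lambda rl ->
  forall t phi : R,
    0 <= t ->
    omega0 * t = RInt (phi_integrand (ecc lambda omega0)) 0 phi ->
    let r := traj (ecc lambda omega0) rl phi in
    rms N m r = Cmin N m gamma / (cohesion N m gamma r * sqrt (rsum N m)) /\
    is_min_of (fun x => exists r', config N r' /\
                                   cohesion N m gamma r' = cohesion N m gamma r /\
                                   x = rms N m r')
              (rms N m r).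
Proof.
  intros HN Hm Hg Hl Hw Hq [Hcfg Hmin] t phi _ _ r.
  set (A := cohesion N m gamma rl). set (B := gmom N m rl).
  set (P := A * sqrt B).
  assert (HA : 0 < A) by (apply coh_pos; auto).
  assert (HB : 0 < B) by (apply gmom_pos; auto).
  assert (HM : 0 < rsum N m).
  { apply rsum_pos with 0%nat; [lia| |apply Hm; lia]. intros; left; auto. }
  assert (Key : forall r', config N r' -> P <= cohesion N m gamma r' * sqrt (gmom N m r')).
  { intros r' Hr'.
    set (A' := cohesion N m gamma r'). set (B' := gmom N m r').
    assert (HA' : 0 < A') by (apply coh_pos; auto).
    assert (HB' : 0 < B') by (apply gmom_pos; auto).
    assert (sB : 0 < sqrt B) by (apply sqrt_lt_R0; auto).
    assert (sB' : 0 < sqrt B') by (apply sqrt_lt_R0; auto).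
    set (s := sqrt B / sqrt B').
    assert (Hs : 0 < s) by (unfold s; apply Rdiv_lt_0_compat; auto).
    assert (Hc : RtoC s <> 0%C).
    { intro E. apply (f_equal fst) in E. simpl in E. lra. }
    assert (Hcm : Cmod (RtoC s) = s) by (rewrite Cmod_R; apply Rabs_pos_eq; lra).
    pose proof (Hmin (scale r' (RtoC s)) (config_scale N r' _ Hc Hr')) as H.
    rewrite gmom_scale, coh_scale, Hcm in H. fold A' B' in H.
    assert (s ^ 2 * B' = B).
    { unfold s. unfold Rdiv. rewrite Rpow_mult_distr, pow_inv.
      rewrite <- !Rsqr_pow2, !Rsqr_sqrt by lra. field. lra. }
    fold A B in H. rewrite H0 in H.
    assert (A <= / s * A') by lra.
    unfold P. unfold s in H1.
    replace (/ (sqrt B / sqrt B') * A') with (A' * sqrt B' / sqrt B) in H1 by (field; lra).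
    apply Rmult_le_compat_r with (r := sqrt B) in H1; [|lra].
    replace (A' * sqrt B' / sqrt B * sqrt B) with (A' * sqrt B') in H1 by (field; lra).
    exact H1. }
  assert (HC : Cmin N m gamma = P).
  { unfold Cmin. rewrite (is_glb_Rbar_unique _ (Finite P)); [reflexivity|].
    split.
    - intros x [r' [Hc' [Hg1 Hx]]]. simpl. rewrite <- Hx.
      pose proof (Key r' Hc'). rewrite Hg1, sqrt_1 in H. lra.
    - intros b Hb. apply Hb.
      assert (sB : 0 < sqrt B) by (apply sqrt_lt_R0; auto).
      assert (Hc : RtoC (/ sqrt B) <> 0%C).
      { intro E. apply (f_equal fst) in E. simpl in E.
        pose proof (Rinv_0_lt_compat _ sB). lra. }
      assert (Hcm : Cmod (RtoC (/ sqrt B)) = / sqrt B).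
      { rewrite Cmod_R; apply Rabs_pos_eq. left; apply Rinv_0_lt_compat; auto. }
      exists (scale rl (RtoC (/ sqrt B))). split; [apply config_scale; auto|].
      rewrite gmom_scale, coh_scale, Hcm. fold A B. split.
      + rewrite pow_inv, <- Rsqr_pow2, Rsqr_sqrt by lra. field. lra.
      + unfold P. rewrite Rinv_inv. ring. }
  set (e := ecc lambda omega0).
  set (a := afun e phi).
  assert (Ha : 0 < a).
  { unfold a, afun, e, ecc.
    assert (0 < omega0 ^ 2) by (apply pow2_gt_0; auto).
    assert (0 < omega0 ^ 2 / (2 * lambda)) by (apply Rdiv_lt_0_compat; lra).
    set (q := omega0 ^ 2 / (2 * lambda)) in *.
    pose proof (COS_bound phi).
    apply Rdiv_lt_0_compat; [lra|].
    destruct (Rle_dec 0 (1 - q)); nra. }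
  set (c := Cmult (RtoC a) (cos phi, sin phi)).
  assert (Hcm : Cmod c = a).
  { unfold c. rewrite Cmod_mult, Cmod_R, Rabs_pos_eq by lra.
    unfold Cmod; simpl. pose proof (sin2_cos2 phi) as S2. unfold Rsqr in S2.
    replace (cos phi * (cos phi * 1) + sin phi * (sin phi * 1)) with 1 by lra.
    rewrite sqrt_1. ring. }
  assert (Hc : c <> 0%C).
  { intro E. rewrite E, Cmod_0 in Hcm. lra. }
  assert (Hr : r = scale rl c) by reflexivity.
  assert (Hrc : config N r) by (rewrite Hr; apply config_scale; auto).
  assert (Hfr : cohesion N m gamma r = / a * A) by (rewrite Hr, coh_scale, Hcm; reflexivity).
  assert (Hgr : gmom N m r = a ^ 2 * B) by (rewrite Hr, gmom_scale, Hcm; reflexivity).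
  assert (sB : 0 < sqrt B) by (apply sqrt_lt_R0; auto).
  assert (sM : 0 < sqrt (rsum N m)) by (apply sqrt_lt_R0; auto).
  assert (Hrms : rms N m r = a * sqrt B / sqrt (rsum N m)).
  { unfold rms. rewrite Hgr, sqrt_div_alt by auto. rewrite sqrt_mult by (try apply pow2_ge_0; lra).
    rewrite <- Rsqr_pow2, sqrt_Rsqr by lra. reflexivity. }
  split.
  - rewrite Hrms, HC, Hfr. unfold P. field. repeat split; lra.
  - split.
    + exists r. auto.
    + intros y [r' [Hc' [Hf' ->]]].
      pose proof (Key r' Hc') as K. rewrite Hf', Hfr in K. unfold P in K.
      assert (sqrt (gmom N m r') >= a * sqrt B).
      { assert (0 < / a) by (apply Rinv_0_lt_compat; auto).
        assert (a * sqrt B * (/ a * A) <= sqrt (gmom N m r') * (/ a * A)).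
        { replace (a * sqrt B * (/ a * A)) with (A * sqrt B) by (field; lra). lra. }
        apply Rmult_le_reg_r in H0; [lra|]. apply Rmult_lt_0_compat; auto. }
      rewrite Hrms. unfold rms.
      assert (0 <= gmom N m r') by (apply rsum_nonneg; intros i Hi; pose proof (Hm i Hi); pose proof (Cmod_ge_0 (r' i)); nra).
      rewrite sqrt_div_alt by auto.
      apply Rmult_le_compat_r; [left; apply Rinv_0_lt_compat; auto | lra].
Qed.
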